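(* Let $A$ be a subset of a real Banach space $X$. If $\mathbf E(A)<\infty$, then $A$ is precompact.
   Context: A brick in $X$ is a set $K_{\mathcal B,\mathcal E}=\{x\in X:\ |e_n^*(x)|\le\varepsilon_n\ \forall n\}$, where $\mathcal B=(e_n)$ is a normalized Schauder basis of $X$ with biorthogonal functionals $(e_n^* )$ and $\mathcal E=(\varepsilon_n)$ is a sequence of nonnegative numbers. Its unconditional radius is $r^{\rm unc}(K_{\mathcal B,\mathcal E})=\sup_{\theta_n=\pm1}\|\sum_n\theta_n\varepsilon_ne_n\|$ (norm of a divergent series $=\infty$). The entropy is $\mathbf E(A)=\inf\{r^{\rm unc}(K_{\mathcal B,\mathcal E}): A\subseteq K_{\mathcal B,\mathcal E}\}$, equal to $\infty$ if no brick of finite unconditional radius contains $A$. A set is precompact if for every $\varepsilon>0$ it contains a finite $\varepsilon$-net. *)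

(* Defs.v *)
From HB Require Import structures.
From mathcomp Require Import all_boot all_order all_algebra.
From mathcomp Require Import all_classical all_reals all_analysis.
Set Implicit Arguments. Unset Strict Implicit. Unset Printing Implicit Defensive.
Import Order.TTheory GRing.Theory Num.Theory.
Import numFieldNormedType.Exports.
Local Open Scope classical_set_scope.
Local Open Scope ring_scope.

Section Bricks.
Variables (R : realType) (X : completeNormedModType R).

Definition schauder_basis (e : nat -> X) : Prop :=
  forall x : X, exists! a : nat -> R,
    series (fun k => a k *: e k) @ \oo --> x.

Definition normalized (e : nat -> X) : Prop := forall n, `|e n| = 1.

Definition normalized_schauder_basis (e : nat -> X) : Prop :=
  schauder_basis e /\ normalized e.

(* biorthogonal (coefficient) functionals: e_n^*(x) = the n-th coefficient of
   the unique expansion of x (meaningful when e is a Schauder basis). *)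
Definition coef (e : nat -> X) (n : nat) (x : X) : R :=
  xget (fun _ => 0) [set a : nat -> R | series (fun k => a k *: e k) @ \oo --> x] n.

Definition brick (e : nat -> X) (eps : nat -> R) : set X :=
  [set x | forall n, `|coef e n x| <= eps n].

Definition series_norm (u : nat -> X) : \bar R :=
  if `[< cvg (series u @ \oo) >] then (`|lim (series u @ \oo)|)%:E else +oo%E.

Definition r_unc (e : nat -> X) (eps : nat -> R) : \bar R :=
  ereal_sup [set r | exists theta : nat -> R,
     (forall n, theta n = 1 \/ theta n = -1) /\
     r = series_norm (fun n => (theta n * eps n) *: e n)].

(* entropy E(A); the infimum over the empty set is +oo *)
Definition entropy (A : set X) : \bar R :=
  ereal_inf [set r | exists (e : nat -> X) (eps : nat -> R),
     [/\ normalized_schauder_basis e, (forall n, 0 <= eps n),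
         A `<=` brick e eps & r = r_unc e eps]].

Definition precompact_net (A : set X) : Prop :=
  forall eps : R, 0 < eps -> exists s : seq X,
    (forall y, y \in s -> A y) /\
    (forall x, A x -> exists2 y, y \in s & `|x - y| < eps).

End Bricks.

(* Main.v *)
Require Import Defs.
From HB Require Import structures.
From mathcomp Require Import all_boot all_order all_algebra.
From mathcomp Require Import all_classical all_reals all_analysis.
From mathcomp Require Import ring lra.
Import Order.TTheory GRing.Theory Num.Theory.
Import numFieldNormedType.Exports.
Local Open Scope classical_set_scope.
Local Open Scope ring_scope.

Fixpoint bst (g : nat -> nat) (n : nat) : nat :=
  match n with 0 => 0%N | k.+1 => if (k.+1 < g (bst g k))%N then bst g k else k.+1 end.

Lemma bst_in g b k : bst g b = b -> (b + k < g b)%N -> bst g (b + k) = b.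
Proof.
move=> hb; elim: k => [|k IH]; first by rewrite addn0.
rewrite addnS => h /=; rewrite IH ?h //; exact: ltnW.
Qed.

Lemma bst_next g b : bst g b = b -> (b < g b)%N -> bst g (g b) = g b.
Proof.
move=> hb hg; have e : g b = (b + (g b - b).-1).+1.
  by rewrite -addnS prednK ?subnKC ?subn_gt0 // ltnW.
have h1 : (b + (g b - b).-1 < g b)%N by rewrite {2}e.
rewrite [in bst _ (g b)]e /= bst_in // -e ltnn.
by [].
Qed.

Lemma bst_unbounded g : (forall b, (b < g b)%N) -> forall K, exists b, bst g b = b /\ (K <= b)%N.
Proof.
move=> hg; elim=> [|K [b [hb Kb]]]; first by exists 0%N.
have [Kb'|] := ltnP K b; first by exists b.
move=> bK; exists (g b); split; first exact: bst_next.
by apply: leq_trans (hg b); rewrite ltnS.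
Qed.

Set Implicit Arguments. Unset Strict Implicit.
Section S.
Variables (R : realType) (X : completeNormedModType R).

Lemma sign_step (d v : X) (a eps : R) : `|a| <= eps ->
  exists2 s : R, (s = 1 \/ s = -1) & `|d + a *: v| <= `|d + (s * eps) *: v|.
Proof.
move=> ha.
have e0 : 0 <= eps by apply: le_trans ha.
have key : `|d + a *: v| <= Num.max `|d + eps *: v| `|d + (-1 * eps) *: v|.
  have [eps0|epsn0] := eqVneq eps 0.
    move: ha; rewrite eps0 normr_le0 => /eqP ->.
    by rewrite mulr0 scale0r le_max lexx.
  have epsp : 0 < eps by rewrite lt_def epsn0.
  have [ha1 ha2] : -eps <= a /\ a <= eps.
    by split; move: ha; rewrite ler_norml => /andP[].
  set l := (eps + a) / (2 * eps).
  have l0 : 0 <= l by rewrite /l divr_ge0 // ?mulr_ge0 //; lra.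
  have l1 : 0 <= 1 - l.
    rewrite subr_ge0 /l ler_pdivrMr ?mulr_gt0 //; lra.
  have -> : d + a *: v = l *: (d + eps *: v) + (1 - l) *: (d + (-1 * eps) *: v).
    have h1 : l + (1 - l) = 1 by rewrite addrC subrK.
    have h2 : l * eps + (1 - l) * (-1 * eps) = a.
      rewrite /l. field. exact: epsn0.
    by rewrite !scalerDr !scalerA addrACA -!scalerDl h1 h2 scale1r.
  apply: (le_trans (ler_normD _ _)).
  clearbody l; rewrite !normrZ (ger0_norm l0) (ger0_norm l1).
  set n1 := `|d + eps *: v|; set n2 := `|d + (-1 * eps) *: v|.
  have m1 : n1 <= Num.max n1 n2 by rewrite le_max lexx.
  have m2 : n2 <= Num.max n1 n2 by rewrite le_max lexx orbT.
  have := ler_wpM2l l0 m1; have := ler_wpM2l l1 m2.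
  set M := Num.max n1 n2 => q1 q2.
  have -> : M = l * M + (1 - l) * M by ring.
  exact: lerD.
have [n12|n21] := leP `|d + eps *: v| `|d + (-1 * eps) *: v|.
  exists (-1); first by right.
  by move: key; rewrite max_r.
exists 1; first by left.
by move: key; rewrite max_l ?mul1r // ltW.
Qed.


Definition signs (th : nat -> R) := forall n, th n = 1 \/ th n = -1.

Lemma sign_sum (e : nat -> X) (eps a : nat -> R) (N M : nat) (c : X) :
  (forall n, `|a n| <= eps n) -> exists2 th : nat -> R, signs th &
  `|c + \sum_(N <= n < M) a n *: e n| <= `|c + \sum_(N <= n < M) (th n * eps n) *: e n|.
Proof.
move=> ha; elim: M c => [|M IH] c.
  by exists (fun=> 1) => [n|]; [left | rewrite !big_geq].
have [NM|MN] := leqP N M; last first.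
  by exists (fun=> 1) => [n|]; [left | rewrite !big_geq].
rewrite !big_nat_recr //=.
have [th sth H] := IH (c + a M *: e M).
have [s ss Hs] := sign_step (c + \sum_(N <= n < M) (th n * eps n) *: e n) (e M) (ha M).
exists (fun n => if n == M then s else th n).
  by move=> n; case: eqP.
rewrite big_nat_recr //= eqxx.
have -> : \sum_(N <= n < M) ((if n == M then s else th n) * eps n) *: e n =
          \sum_(N <= n < M) (th n * eps n) *: e n.
  apply: eq_big_nat => n /andP[_ nM]; by rewrite (ltn_eqF nM).
rewrite !addrA; apply: le_trans Hs; by move: H; rewrite !(addrAC c (a M *: e M)).
Qed.


Lemma tail_unif (e : nat -> X) (eps : nat -> R) :
  (forall th, signs th -> cvg (series (fun n => (th n * eps n) *: e n) @ \oo)) ->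
  forall del, 0 < del -> exists N, forall M th, signs th ->
    `|\sum_(N <= n < M) (th n * eps n) *: e n| <= del.
Proof.
move=> Hc del del0.
apply: contrapT => /forallNP nH.
have H1 : forall N, exists p : nat * (nat -> R), signs p.2 /\
    del < `|\sum_(N <= n < p.1) (p.2 n * eps n) *: e n|.
  move=> N; have /existsNP [M /existsNP [th /not_implyP [sth /negP]]] := nH N.
  by rewrite -ltNge => h; exists (M, th).
have [f Hf] := choice H1.
pose g := fun N => (f N).1.
pose th := fun n => (f (bst g n)).2 n.
have sth : signs th by move=> n; case: (Hf (bst g n)) => + _; apply.
have gt : forall b, (b < g b)%N.
  move=> b; rewrite ltnNge; apply/negP => gb.
  by have := (Hf b).2; rewrite big_geq // normr0 ltNge (ltW del0).
have blk : forall b, bst g b = b -> \sum_(b <= n < g b) (th n * eps n) *: e n =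
    \sum_(b <= n < g b) ((f b).2 n * eps n) *: e n.
  move=> b hb; apply: eq_big_nat => n /andP[bn ng].
  have e1 : bst g n = b.
    by have := @bst_in g b (n - b) hb; rewrite subnKC //; apply.
  by rewrite /th e1.
have := Hc th sth => /cvgrPdist_lt /(_ (del / 2)) [|K _ HK]; first by lra.
have [b [hb Kb]] := @bst_unbounded g gt K.
have := (Hf b).2; rewrite -blk // -(sub_series_geq _ (ltnW (gt b))).
have h1 := HK b Kb; have h2 := HK (g b) (leq_trans Kb (ltnW (gt b))).
move: h1 h2 => /= h1 h2; set l := limn _ in h1 h2.
have : `|series (fun n => (th n * eps n) *: e n) (g b) - series (fun n => (th n * eps n) *: e n) b| < del.
  set A := series _ (g b); set B := series _ b.
  have -> : A - B = (l - B) - (l - A) by rewrite opprB [RHS]addrC addrA subrK.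
  apply: (le_lt_trans (ler_normB _ _)); lra.
move=> h3 h4; have := lt_trans h3 h4; by rewrite ltxx.
Qed.


Definition netP (B : set X) (d : X -> X -> R) (eta : R) :=
  exists s : seq X, (forall y, y \in s -> B y) /\
    (forall x, B x -> exists2 y, y \in s & d x y < eta).

Lemma net_triv (B : set X) d eta :
  (forall x y, B x -> B y -> d x y < eta) -> netP B d eta.
Proof.
move=> H; have [[y By]|nB] := pselect (exists y, B y).
  exists [:: y]; split; first by move=> z; rewrite inE => /eqP ->.
  by move=> x Bx; exists y; [rewrite inE | exact: H].
exists [::]; split => // x Bx; exfalso; apply: nB; by exists x.
Qed.

Lemma net1 (f : X -> R) (eta : R) (K : nat) : 0 < eta -> forall a B,
  (forall x, B x -> a <= f x <= a + K%:R * eta) ->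
  netP B (fun x y => `|f x - f y|) eta.
Proof.
move=> eta0; elim: K => [|K IH] a B hB.
  apply: net_triv => x y /hB + /hB; rewrite mul0r addr0.
  move=> /andP[h1 h2] /andP[h3 h4].
  have -> : f x - f y = 0 by lra.
  by rewrite normr0.
have hK : K.+1%:R * eta = K%:R * eta + eta by rewrite -natr1 mulrDl mul1r.
have [s2 [s2B s2H]] := IH (a + eta) (B `&` [set x | a + eta <= f x]) (fun x '(conj Bx hx) =>
  ltac:(move: (hB x Bx); rewrite hK => /andP[h1 h2]; apply/andP; split; [exact: hx | lra])).
have [s1 [s1B s1H]] : netP (B `&` [set x | f x < a + eta]) (fun x y => `|f x - f y|) eta.
  apply: net_triv => x y [Bx hx] [By hy]; move: hx hy => /= hx hy.
  move: (hB x Bx) (hB y By) => /andP[h1 h2] /andP[h3 h4].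
  rewrite ltr_norml; apply/andP; split; lra.
exists (s1 ++ s2); split.
  move=> y; rewrite mem_cat => /orP[/s1B []|/s2B []] //.
move=> x Bx; have [hx|hx] := ltP (f x) (a + eta).
  by have [y ys hy] := s1H x (conj Bx hx); exists y => //; rewrite mem_cat ys.
by have [y ys hy] := s2H x (conj Bx hx); exists y => //; rewrite mem_cat ys orbT.
Qed.


Lemma netN (c : nat -> X -> R) (eps : nat -> R) (A : set X) :
  (forall n, 0 <= eps n) -> (forall n x, A x -> `|c n x| <= eps n) ->
  forall N B, B `<=` A -> forall eta, 0 < eta ->
  netP B (fun x y => \sum_(0 <= n < N) `|c n x - c n y|) eta.
Proof.
move=> eps0 hc; elim=> [|N IH] B BA eta eta0.
  by apply: net_triv => x y _ _; rewrite big_geq.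
have e3 : 0 < eta / 3 by lra.
set K := Num.Def.archi_bound (2 * eps N / (eta / 3)).
have hK : 2 * eps N < K%:R * (eta / 3).
  rewrite -(ltr_pdivrMr _ _ e3); apply: archi_boundP; apply: divr_ge0; [apply: mulr_ge0 | exact: ltW] => //.
have [s1 [s1B s1H]] : netP B (fun x y => `|c N x - c N y|) (eta / 3).
  apply: (@net1 (c N) (eta / 3) K e3 (- eps N)) => x Bx.
  move: (hc N x (BA x Bx)); rewrite ler_norml => /andP[h1 h2].
  have := eps0 N; move: hK; set k := K%:R * (eta / 3) => hK h0.
  apply/andP; split; lra.
have H2 : forall y, exists s : seq X, (forall z, z \in s -> (B `&` [set x | `|c N x - c N y| < eta / 3]) z) /\
    (forall x, (B `&` [set x | `|c N x - c N y| < eta / 3]) x ->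
       exists2 z, z \in s & \sum_(0 <= n < N) `|c n x - c n z| < eta / 3).
  by move=> y; apply: IH e3 => x [/BA].
have [F HF] := choice H2.
exists (flatten [seq F y | y <- s1]); split.
  by move=> z /flatten_mapP [y ys zF]; have [+ _] := HF y => /(_ z zF) [].
move=> x Bx; have [y1 y1s h1] := s1H x Bx.
have [_ /(_ x (conj Bx h1)) [y2 y2F h2]] := HF y1.
have [/(_ y2 y2F) [_ h3] _] := HF y1.
exists y2; first by apply/flatten_mapP; exists y1.
rewrite big_nat_recr //=.
have : `|c N x - c N y2| <= `|c N x - c N y1| + `|c N y2 - c N y1|.
  have -> : c N x - c N y2 = (c N x - c N y1) - (c N y2 - c N y1).
    by ring.
  exact: ler_normB.
move: h3 => /= h3; lra.
Qed.

End S.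

Unset Implicit Arguments. Set Strict Implicit.
Theorem proposition4p3 (R : realType) (X : completeNormedModType R) (A : set X) :
  (entropy A < +oo)%E -> precompact_net A.
Proof.
move=> hE eta eta0.
have [r [e [eps [[hb hn] eps0 Ab ->]]] hr] := ereal_inf_lt hE.
have Hc : forall th, signs th -> cvg (series (fun n => (th n * eps n) *: e n) @ \oo).
  move=> th sth.
  have : (series_norm (fun n => (th n * eps n) *: e n) <= r_unc e eps)%E.
    by apply: ereal_sup_ubound; exists th; split.
  rewrite /series_norm; case: asboolP => // _ h.
  by have := le_lt_trans h hr; rewrite ltxx.
have e3 : 0 < eta / 3 by lra.
have [N HN] := tail_unif Hc e3.
have hc : forall n x, A x -> `|coef e n x| <= eps n by move=> n x Ax; exact: Ab x Ax n.
have conv : forall x, series (fun k => coef e k x *: e k) @ \oo --> x.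
  move=> x; have [a [ha _]] := hb x.
  exact: (@xgetPex _ (fun _ => 0) [set a : nat -> R | series (fun k => a k *: e k) @ \oo --> x]
     (ex_intro _ a ha)).
have tail : forall x, A x -> `|x - series (fun k => coef e k x *: e k) N| <= eta / 3.
  move=> x Ax; set u := series _.
  apply: (@cvgr_to_le _ \oo _ _ (fun M => `|u M - u N|)).
  - by apply: cvg_norm; apply: cvgB; [exact: conv | exact: cvg_cst].
  exists N => // M /= NM.
  rewrite /u sub_series_geq //.
  have [th sth H] := sign_sum e N M 0 (fun n => hc n x Ax).
  rewrite !add0r in H; exact: le_trans H (HN M th sth).
have [s [sA sH]] := netN eps0 hc N (@subset_refl _ A) e3.
exists s; split => // x Ax.
have [y ys hy] := sH x Ax; exists y => //.
have hy' := tail y (sA y ys); have hx := tail x Ax.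
set ux := series _ N in hx; set uy := series _ N in hy'.
have hd : `|ux - uy| <= \sum_(0 <= n < N) `|coef e n x - coef e n y|.
  rewrite /ux /uy /series /= -sumrB.
  apply: le_trans (ler_norm_sum _ _ _) _; apply: ler_sum => k _.
  by rewrite -scalerBl normrZ hn mulr1.
have -> : x - y = (x - ux) + (ux - uy) + (uy - y).
  by rewrite !addrA subrK subrK.
apply: le_lt_trans (ler_normD _ _) _.
apply: le_lt_trans (lerD (ler_normD _ _) (lexx _)) _.
rewrite (distrC uy y); lra.
Qed.
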